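(* Consider the planar system $$\frac{dC}{dt} = 1 + m_1\frac{CL}{1+L} - m_2\frac{CL}{1+m_3C} - m_4C,\qquad \frac{dL}{dt} = L - m_5 CL,$$ with positive parameters $m_1,\dots,m_5$, and its equilibrium $E_3=(1/m_5,L_3)$, where $L_3=\frac{-b+\sqrt{\Delta}}{2a}$ with $a=-\frac{m_2}{1+m_3/m_5}$, $b=m_1+m_5-m_4-\frac{m_2}{1+m_3/m_5}$, $c=m_5-m_4$, $\Delta=b^2-4ac$. A Hopf bifurcation occurs at $E_3$ when $$m_2=\frac{(m_3+m_5)^2\,(m_1m_3-m_4m_3-m_5^2)}{m_3\,(m_3m_4+m_5^2)},$$ under the conditions $$m_1>\frac{(m_3m_4+m_5^2)^2}{m_3^2(m_4-m_5)}\quad\text{and}\quad m_4>m_5.$$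
   Context: Nondimensional model of CAR-T cells $C$ and lymphoma cells $L$; $E_3$ is one of the two coexistence equilibria with $C=1/m_5$, its $L$-coordinate being a root of $aL^2+bL+c=0$. *)

(* Defs.v *)
From Stdlib Require Import Reals.
From Coquelicot Require Import Coquelicot.
Open Scope R_scope.

Definition fieldC (m1 m2 m3 m4 : R) (C L : R) : R :=
  1 + m1 * (C * L / (1 + L)) - m2 * (C * L / (1 + m3 * C)) - m4 * C.
Definition fieldL (m5 : R) (C L : R) : R := L - m5 * C * L.

Definition coef_a (m2 m3 m5 : R) : R := - (m2 / (1 + m3 / m5)).
Definition coef_b (m1 m2 m3 m4 m5 : R) : R :=
  m1 + m5 - m4 - m2 / (1 + m3 / m5).
Definition coef_c (m4 m5 : R) : R := m5 - m4.
Definition discr (m1 m2 m3 m4 m5 : R) : R :=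
  (coef_b m1 m2 m3 m4 m5) ^ 2 - 4 * coef_a m2 m3 m5 * coef_c m4 m5.
Definition L3 (m1 m2 m3 m4 m5 : R) : R :=
  (- coef_b m1 m2 m3 m4 m5 + sqrt (discr m1 m2 m3 m4 m5)) / (2 * coef_a m2 m3 m5).
Definition E3 (m1 m2 m3 m4 m5 : R) : R * R := (1 / m5, L3 m1 m2 m3 m4 m5).

Definition jacobian (F G : R -> R -> R) (x y : R) : R * R * R * R :=
  (Derive (fun u => F u y) x, Derive (fun v => F x v) y,
   Derive (fun u => G u y) x, Derive (fun v => G x v) y).

Definition charpoly (J : R * R * R * R) (lam : C) : C :=
  let '(a11, a12, a21, a22) := J in
  Cminus (Cmult (Cminus (RtoC a11) lam) (Cminus (RtoC a22) lam))
         (Cmult (RtoC a12) (RtoC a21)).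
Definition is_eigenvalue (J : R * R * R * R) (lam : C) : Prop :=
  charpoly J lam = RtoC 0.

(* Hopf bifurcation (in the sense of the Hopf bifurcation theorem's
   eigenvalue hypotheses) for a one-parameter family of planar fields
   (F p, G p) with equilibrium branch E p, at parameter value p0:
   near p0 the Jacobian at E p has a pair of complex conjugate eigenvalues
   alpha p +- i omega p (omega p > 0), which are purely imaginary at p0
   (alpha p0 = 0) and cross the imaginary axis transversally
   (alpha'(p0) <> 0). *)
Definition hopf_bifurcation_at (F G : R -> R -> R -> R) (E : R -> R * R) (p0 : R)
  : Prop :=
  exists delta : R, 0 < delta /\
  exists alpha omega : R -> R,
    (forall p, Rabs (p - p0) < delta ->
       F p (fst (E p)) (snd (E p)) = 0 /\ G p (fst (E p)) (snd (E p)) = 0 /\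
       0 < omega p /\
       is_eigenvalue (jacobian (F p) (G p) (fst (E p)) (snd (E p))) (alpha p, omega p) /\
       is_eigenvalue (jacobian (F p) (G p) (fst (E p)) (snd (E p))) (alpha p, - omega p)) /\
    alpha p0 = 0 /\ ex_derive alpha p0 /\ Derive alpha p0 <> 0.

Definition m2_crit (m1 m3 m4 m5 : R) : R :=
  (m3 + m5) ^ 2 * (m1 * m3 - m4 * m3 - m5 ^ 2) / (m3 * (m3 * m4 + m5 ^ 2)).

(* Main.v *)
Require Import Defs.
From Stdlib Require Import Reals Lra Psatz.
From Coquelicot Require Import Coquelicot.
Open Scope R_scope.

Definition a11f m1 m2 m3 m4 C L := m1*(L/(1+L)) - m2*(L/((1+m3*C)^2)) - m4.
Definition a12f m1 m2 m3 C L := m1*(C/(1+L)^2) - m2*(C/(1+m3*C)).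
Definition a21f m5 (L : R) := - m5 * L.
Definition a22f m5 (C : R) := 1 - m5 * C.

Lemma jac_eq m1 m2 m3 m4 m5 C L : 1 + L <> 0 -> 1 + m3 * C <> 0 ->
  jacobian (fieldC m1 m2 m3 m4) (fieldL m5) C L =
  (a11f m1 m2 m3 m4 C L, a12f m1 m2 m3 C L, a21f m5 L, a22f m5 C).
Proof.
  intros H1 H2. unfold jacobian.
  repeat f_equal; apply is_derive_unique;
  unfold fieldC, fieldL, a11f, a12f, a21f, a22f; auto_derive; try (repeat split; auto; fail); field; auto.
Qed.

Lemma eig_lemma a11 a12 a21 a22 w :
  w * w = (a11*a22 - a12*a21) - ((a11+a22)/2)^2 ->
  is_eigenvalue (a11,a12,a21,a22) ((a11+a22)/2, w).
Proof.
  intros H. unfold is_eigenvalue, charpoly, Cminus, Cmult, Cplus, Copp, RtoC. simpl.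
  apply injective_projections; simpl; nra.
Qed.


Definition Pf m1 m3 m4 m5 p := (coef_b m1 p m3 m4 m5 - sqrt (discr m1 p m3 m4 m5))/2.
Definition alphaf m1 m3 m4 m5 p := (-m5 + m3/(m3+m5) * Pf m1 m3 m4 m5 p)/2.

Lemma root_L3 m1 m3 m4 m5 p : 0 < m3 -> 0 < m5 -> 0 < p -> 0 <= discr m1 p m3 m4 m5 ->
  2 * coef_a p m3 m5 * L3 m1 p m3 m4 m5 + coef_b m1 p m3 m4 m5 = sqrt (discr m1 p m3 m4 m5) /\
  coef_a p m3 m5 * (L3 m1 p m3 m4 m5)^2 + coef_b m1 p m3 m4 m5 * L3 m1 p m3 m4 m5 + coef_c m4 m5 = 0.
Proof.
  intros h3 h5 hp hd.
  assert (ha : coef_a p m3 m5 <> 0).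
  { unfold coef_a. assert (0 < 1 + m3/m5).
    { assert (0 < m3/m5) by (apply Rdiv_lt_0_compat; lra). lra. }
    assert (0 < p / (1 + m3/m5)) by (apply Rdiv_lt_0_compat; lra). lra. }
  assert (e1 : 2 * coef_a p m3 m5 * L3 m1 p m3 m4 m5 + coef_b m1 p m3 m4 m5 = sqrt (discr m1 p m3 m4 m5)).
  { unfold L3. field. auto. }
  split; auto.
  pose proof (sqrt_sqrt _ hd) as hs. rewrite <- e1 in hs.
  unfold discr in hs.
  set (a := coef_a p m3 m5) in *. set (b := coef_b m1 p m3 m4 m5) in *.
  set (c := coef_c m4 m5) in *. set (L := L3 m1 p m3 m4 m5) in *.
  assert (4 * a * (a * L^2 + b*L + c) = 0) by nra.
  apply Rmult_integral in H. destruct H; [|auto]. exfalso. apply ha. lra.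
Qed.

Lemma at_p m1 m3 m4 m5 p : 0 < m3 -> 0 < m5 -> 0 < p -> 0 <= discr m1 p m3 m4 m5 ->
  0 < 1 + L3 m1 p m3 m4 m5 ->
  fieldC m1 p m3 m4 (1/m5) (L3 m1 p m3 m4 m5) = 0 /\
  (a11f m1 p m3 m4 (1/m5) (L3 m1 p m3 m4 m5) + a22f m5 (1/m5)) / 2 = alphaf m1 m3 m4 m5 p.
Proof.
  intros h3 h5 hp hd hL.
  destruct (root_L3 m1 m3 m4 m5 p h3 h5 hp hd) as [e1 e2].
  unfold alphaf, Pf. rewrite <- e1.
  revert e2. unfold fieldC, a11f, a22f, coef_a, coef_b, coef_c.
  set (L := L3 m1 p m3 m4 m5) in *. intros e2.
  assert (hs : 0 < 1 + m3/m5).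
  { assert (0 < m3/m5) by (apply Rdiv_lt_0_compat; lra). lra. }
  assert (hs' : 1 + m3 * (1/m5) <> 0).
  { replace (1 + m3 * (1/m5)) with (1 + m3/m5) by (field; lra). lra. }
  set (R0 := - (p / (1 + m3 / m5)) * L ^ 2 + (m1 + m5 - m4 - p / (1 + m3 / m5)) * L + (m5 - m4)) in *.
  split.
  - transitivity (R0 / (m5 * (1+L))).
    + unfold R0. field. repeat split; intro; lra.
    + rewrite e2. field. repeat split; intro; lra.
  - transitivity ((-m5 + m3 / (m3 + m5) *
     ((m1 + m5 - m4 - p / (1 + m3 / m5) -
      (2 * - (p / (1 + m3 / m5)) * L + (m1 + m5 - m4 - p / (1 + m3 / m5)))) / 2)) / 2 + R0 / (2*(1+L))).
    + unfold R0. field. repeat split; intro; lra.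
    + rewrite e2. field. repeat split; intro; lra.
Qed.



Definition Dval m1 m3 m4 m5 p :=
  m3/(m3+m5) * ((-1 + (coef_b m1 p m3 m4 m5 - 2*coef_c m4 m5)/sqrt(discr m1 p m3 m4 m5))/(2*(1+m3/m5)))/2.

Lemma dalpha m1 m3 m4 m5 p : 0 < m3 -> 0 < m5 -> 0 < discr m1 p m3 m4 m5 ->
  is_derive (alphaf m1 m3 m4 m5) p (Dval m1 m3 m4 m5 p).
Proof.
  intros h3 h5 hd.
  assert (hs : 0 < 1 + m3/m5).
  { assert (0 < m3/m5) by (apply Rdiv_lt_0_compat; lra). lra. }
  assert (hq : 0 < sqrt (discr m1 p m3 m4 m5)) by (apply sqrt_lt_R0; auto).
  set (r := sqrt (discr m1 p m3 m4 m5)) in *.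
  unfold Dval. fold r.
  unfold alphaf, Pf, discr, coef_b, coef_a, coef_c in *.
  auto_derive.
  - repeat split; try intro; lra.
  - match goal with |- context [sqrt ?A] =>
      let E := fresh in assert (E : (A:R) = (m1 + m5 - m4 - p / (1 + m3 / m5)) ^ 2 -
       4 * - (p / (1 + m3 / m5)) * (m5 - m4)) by (unfold Rdiv; ring); rewrite E end.
    fold r. field. repeat split; intro; lra.
Qed.

Lemma Dnz m1 m3 m4 m5 p : 0 < m1 -> 0 < m3 -> 0 < m5 -> m4 <> m5 -> 0 < discr m1 p m3 m4 m5 ->
  Dval m1 m3 m4 m5 p <> 0.
Proof.
  intros h1 h3 h5 h45 hd.
  assert (hs : 0 < 1 + m3/m5).
  { assert (0 < m3/m5) by (apply Rdiv_lt_0_compat; lra). lra. }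
  assert (hq : 0 < sqrt (discr m1 p m3 m4 m5)) by (apply sqrt_lt_R0; auto).
  pose proof (sqrt_sqrt _ (Rlt_le _ _ hd)) as hsq.
  unfold Dval. intro H.
  assert (H2 : coef_b m1 p m3 m4 m5 - 2*coef_c m4 m5 = sqrt (discr m1 p m3 m4 m5)).
  { assert (H3 : -1 + (coef_b m1 p m3 m4 m5 - 2*coef_c m4 m5)/sqrt(discr m1 p m3 m4 m5) = 0).
    { assert (hm : 0 < m3/(m3+m5)) by (apply Rdiv_lt_0_compat; lra).
      set (u := -1 + (coef_b m1 p m3 m4 m5 - 2*coef_c m4 m5)/sqrt(discr m1 p m3 m4 m5)) in *.
      assert (u = (Dval m1 m3 m4 m5 p) * 4 * (1+m3/m5) / (m3/(m3+m5))).
      { unfold Dval. fold u. field. repeat split; intro; lra. }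
      unfold Dval in H0. fold u in H0. rewrite H0, H. field. repeat split; intro; lra. }
    set (r := sqrt (discr m1 p m3 m4 m5)) in *.
    apply (f_equal (fun x => (x + 1) * r)) in H3.
    replace ((-1 + (coef_b m1 p m3 m4 m5 - 2 * coef_c m4 m5) / r + 1) * r) with (coef_b m1 p m3 m4 m5 - 2 * coef_c m4 m5) in H3 by (field; intro; lra).
    lra. }
  rewrite <- H2 in hsq.
  revert hsq. unfold discr, coef_a, coef_b, coef_c. intro hsq.
  set (k := p / (1 + m3/m5)) in *.
  assert (hc : (m5 - m4) * (m1) = 0) by nra.
  apply Rmult_integral in hc. destruct hc; [apply h45| ]; lra.
Qed.

Lemma loc_pos (f : R -> R) x : continuous f x -> 0 < f x -> locally x (fun y => 0 < f y).
Proof.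
  intros Hc Hp. apply Hc.
  exists (mkposreal _ Hp). intros z Hz. simpl in Hz.
  unfold ball in Hz; simpl in Hz. unfold AbsRing_ball, abs, minus, plus, opp in Hz; simpl in Hz.
  apply Rabs_def2 in Hz. lra.
Qed.

Lemma loc_to_delta (Q : R -> Prop) x : locally x Q -> exists d, 0 < d /\ forall y, Rabs (y - x) < d -> Q y.
Proof.
  intros [d Hd]. exists d. split. apply cond_pos. intros y Hy. apply Hd.
  unfold ball; simpl. unfold AbsRing_ball, abs, minus, plus, opp; simpl. exact Hy.
Qed.


Definition Wexpr m1 m3 m4 m5 p L :=
  (a11f m1 p m3 m4 (1/m5) L * a22f m5 (1/m5) - a12f m1 p m3 (1/m5) L * a21f m5 L)
  - ((a11f m1 p m3 m4 (1/m5) L + a22f m5 (1/m5))/2)^2.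

Lemma exd_W m1 m3 m4 m5 (Lf : R -> R) p : 0 < m3 -> 0 < m5 -> ex_derive Lf p -> 0 < 1 + Lf p ->
  ex_derive (fun q => Wexpr m1 m3 m4 m5 q (Lf q)) p.
Proof.
  intros h3 h5 hd hL.
  assert (0 < m3 * / m5) by (apply Rmult_lt_0_compat; [lra| apply Rinv_0_lt_compat; lra]).
  unfold Wexpr, a11f, a12f, a21f, a22f. auto_derive.
  repeat split; auto; try (intro; nra).
Qed.

Lemma exd_sqrtD m1 m3 m4 m5 p : 0 < m3 -> 0 < m5 -> 0 < discr m1 p m3 m4 m5 ->
  ex_derive (fun q => sqrt (discr m1 q m3 m4 m5)) p.
Proof.
  intros h3 h5 hd.
  apply (ex_derive_comp sqrt (fun q => discr m1 q m3 m4 m5)).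
  - auto_derive. auto.
  - assert (0 < m3 / m5) by (apply Rdiv_lt_0_compat; lra).
    unfold discr, coef_a, coef_b, coef_c. auto_derive. repeat split; intro; lra.
Qed.

Lemma exd_L3 m1 m3 m4 m5 p : 0 < m3 -> 0 < m5 -> 0 < p -> 0 < discr m1 p m3 m4 m5 ->
  ex_derive (fun q => L3 m1 q m3 m4 m5) p.
Proof.
  intros h3 h5 hp hd.
  assert (H : forall Sf : R -> R, ex_derive Sf p ->
    ex_derive (fun q => (- coef_b m1 q m3 m4 m5 + Sf q) / (2 * coef_a q m3 m5)) p).
  { intros Sf hS. assert (0 < m3 / m5) by (apply Rdiv_lt_0_compat; lra).
    assert (0 < p / (1 + m3/m5)) by (apply Rdiv_lt_0_compat; lra).
    unfold coef_a, coef_b. auto_derive. repeat split; auto; intro; lra. }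
  exact (H _ (exd_sqrtD m1 m3 m4 m5 p h3 h5 hd)).
Qed.


Lemma p0_facts m1 m3 m4 m5 : 0 < m1 -> 0 < m3 -> 0 < m4 -> 0 < m5 ->
  m1 > (m3 * m4 + m5 ^ 2) ^ 2 / (m3 ^ 2 * (m4 - m5)) -> m4 > m5 ->
  let p0 := m2_crit m1 m3 m4 m5 in
  0 < p0 /\ 0 < discr m1 p0 m3 m4 m5 /\ 0 < 1 + L3 m1 p0 m3 m4 m5 /\
  alphaf m1 m3 m4 m5 p0 = 0 /\ 0 < Wexpr m1 m3 m4 m5 p0 (L3 m1 p0 m3 m4 m5).
Proof.
  intros h1 h3 h4 h5 hm h45 p0.
  set (X := m3 * m4 + m5 ^ 2).
  set (Y := m1 * m3 - m4 * m3 - m5 ^ 2).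
  set (D := m1 * m3 ^ 2 * (m4 - m5) - X ^ 2).
  assert (hX : 0 < X) by (unfold X; nra).
  assert (hD : 0 < D).
  { unfold D. fold X in hm.
    assert (0 < m3 ^ 2 * (m4 - m5)) by (apply Rmult_lt_0_compat; [apply pow_lt|]; lra).
    apply (Rmult_lt_compat_r (m3 ^ 2 * (m4 - m5))) in hm; auto.
    assert (e : X ^ 2 / (m3 ^ 2 * (m4 - m5)) * (m3 ^ 2 * (m4 - m5)) = X ^ 2) by (field; lra).
    lra. }
  assert (hY : 0 < Y).
  { assert (X >= m3 * (m4 - m5)) by (unfold X; nra).
    assert (m1 * m3 * (m3 * (m4 - m5)) > X * (m3 * (m4 - m5))) by (unfold D in hD; nra).
    assert (m1 * m3 > X).
    { apply (Rmult_lt_reg_r (m3 * (m4 - m5))); nra. }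
    unfold Y; unfold X in *; lra. }
  assert (hY' : 0 < m1 * m3 - m4 * m3 - m5 ^ 2) by exact hY.
  assert (hX' : 0 < m3 * m4 + m5 ^ 2) by exact hX.
  assert (hD' : 0 < m1 * m3 ^ 2 * (m4 - m5) - (m3 * m4 + m5 ^ 2) ^ 2) by exact hD.
  assert (hp0 : p0 = (m3 + m5) ^ 2 * Y / (m3 * X)) by reflexivity.
  assert (hpp : 0 < p0).
  { rewrite hp0. apply Rdiv_lt_0_compat; apply Rmult_lt_0_compat; try apply pow_lt; lra. }
  assert (hdisc : discr m1 p0 m3 m4 m5 = (D / (m3 * X)) ^ 2).
  { unfold discr, coef_a, coef_b, coef_c. rewrite hp0. unfold D, Y, X. field.
    repeat split; intro; nra. }
  assert (hDX : 0 < D / (m3 * X)) by (apply Rdiv_lt_0_compat; nra).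
  assert (hsq : sqrt (discr m1 p0 m3 m4 m5) = D / (m3 * X)).
  { rewrite hdisc. apply sqrt_pow2. lra. }
  assert (hL : L3 m1 p0 m3 m4 m5 = X / Y).
  { unfold L3. rewrite hsq. unfold coef_a, coef_b. rewrite hp0. unfold D, Y, X. field.
    repeat split; intro; nra. }
  split; [auto|]. split; [rewrite hdisc; nra|].
  split. { rewrite hL. assert (0 < X / Y) by (apply Rdiv_lt_0_compat; lra). lra. }
  split.
  { unfold alphaf, Pf. rewrite hsq. unfold coef_b. rewrite hp0. unfold D, Y, X. field.
    repeat split; intro; nra. }
  rewrite hL.
  replace (Wexpr m1 m3 m4 m5 p0 (X / Y)) with (D / (m1 * m3 ^ 2)).
  { apply Rdiv_lt_0_compat; nra. }
  unfold Wexpr, a11f, a12f, a21f, a22f. rewrite hp0. unfold D, Y, X. field.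
  repeat split; intro; nra.
Qed.


Theorem theorem8 (m1 m3 m4 m5 : R) :
  0 < m1 -> 0 < m3 -> 0 < m4 -> 0 < m5 ->
  m1 > (m3 * m4 + m5 ^ 2) ^ 2 / (m3 ^ 2 * (m4 - m5)) ->
  m4 > m5 ->
  hopf_bifurcation_at
    (fun m2 => fieldC m1 m2 m3 m4)
    (fun _ => fieldL m5)
    (fun m2 => E3 m1 m2 m3 m4 m5)
    (m2_crit m1 m3 m4 m5).
Proof.
  intros h1 h3 h4 h5 hm h45.
  destruct (p0_facts m1 m3 m4 m5 h1 h3 h4 h5 hm h45) as (hp & hd & hL & ha & hW).
  set (p0 := m2_crit m1 m3 m4 m5) in *.
  assert (hs' : 1 + m3 * (1/m5) <> 0).
  { assert (0 < m3 * (1/m5)) by (apply Rmult_lt_0_compat; [lra| apply Rdiv_lt_0_compat; lra]). lra. }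
  assert (hexL := exd_L3 m1 m3 m4 m5 p0 h3 h5 hp hd).
  assert (Hloc : locally p0 (fun p => 0 < p /\ 0 < discr m1 p m3 m4 m5 /\
     0 < 1 + L3 m1 p m3 m4 m5 /\ 0 < Wexpr m1 m3 m4 m5 p (L3 m1 p m3 m4 m5))).
  { repeat apply filter_and.
    - apply (loc_pos (fun p => p)); auto. apply continuous_id.
    - apply (loc_pos (fun p => discr m1 p m3 m4 m5)); auto. apply (@ex_derive_continuous R_AbsRing R_NormedModule).
      assert (0 < m3 / m5) by (apply Rdiv_lt_0_compat; lra).
      unfold discr, coef_a, coef_b, coef_c. auto_derive. repeat split; intro; lra.
    - apply (loc_pos (fun p => 1 + L3 m1 p m3 m4 m5)); auto. apply (@ex_derive_continuous R_AbsRing R_NormedModule).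
      assert (G : forall Lf : R -> R, ex_derive Lf p0 -> ex_derive (fun p => 1 + Lf p) p0).
      { intros Lf HL. auto_derive. auto. }
      exact (G _ hexL).
    - apply (loc_pos (fun p => Wexpr m1 m3 m4 m5 p (L3 m1 p m3 m4 m5))); auto.
      apply (@ex_derive_continuous R_AbsRing R_NormedModule). apply exd_W; auto. }
  destruct (loc_to_delta _ _ Hloc) as (d & hd0 & Hd).
  exists d. split; auto.
  exists (alphaf m1 m3 m4 m5), (fun p => sqrt (Wexpr m1 m3 m4 m5 p (L3 m1 p m3 m4 m5))).
  split.
  - intros p Hp. destruct (Hd p Hp) as (hpp & hdp & hLp & hWp).
    unfold E3; simpl.
    destruct (at_p m1 m3 m4 m5 p h3 h5 hpp (Rlt_le _ _ hdp) hLp) as [eF eA].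
    split; [exact eF|]. split; [unfold fieldL; field; intro; lra|].
    split; [apply sqrt_lt_R0; auto|].
    rewrite jac_eq by lra. rewrite <- eA.
    pose proof (sqrt_sqrt _ (Rlt_le _ _ hWp)) as hsq.
    split; apply eig_lemma.
    + rewrite hsq. reflexivity.
    + replace (- sqrt (Wexpr m1 m3 m4 m5 p (L3 m1 p m3 m4 m5)) * - sqrt (Wexpr m1 m3 m4 m5 p (L3 m1 p m3 m4 m5)))
        with (sqrt (Wexpr m1 m3 m4 m5 p (L3 m1 p m3 m4 m5)) * sqrt (Wexpr m1 m3 m4 m5 p (L3 m1 p m3 m4 m5))) by ring.
      rewrite hsq. reflexivity.
  - split; [exact ha|].
    pose proof (dalpha m1 m3 m4 m5 p0 h3 h5 hd) as hD.
    split; [exists (Dval m1 m3 m4 m5 p0); exact hD|].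
    rewrite (is_derive_unique _ _ _ hD).
    apply Dnz; auto. lra.
Qed.
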